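(* There is an absolute constant $C>0$ such that the following holds. If $\zeta\le\min\{\frac12,\mathrm{ICR}\}$ and $(\gamma,\Delta)$ with $\gamma>0$, $\Delta\in[0,1)$ satisfy $\gamma<\frac{1+\Delta}{\zeta\sigma_{\max}^2}$ and $\frac{(1-\zeta)\gamma}{1-\Delta}\cdot\frac1n\operatorname{tr}(\boldsymbol A\boldsymbol A^T)<1$, then $\sqrt{\lambda_{2,\max}}\ge1-\frac{C\zeta}{\bar\kappa}$.
   Context: $\boldsymbol A\in\mathbb R^{n\times d}$; $\sigma_1^2\ge\dots\ge\sigma_n^2\ge0$ eigenvalues of $\boldsymbol A\boldsymbol A^T$, $\sigma_{\max}^2$ largest, $\sigma_{\min}^2$ smallest nonzero; $\bar\kappa=\frac{\frac1n\sum_j\sigma_j^2}{\sigma_{\min}^2}$, $\kappa=\sigma_{\max}^2/\sigma_{\min}^2$, $\mathrm{ICR}=\bar\kappa/\sqrt\kappa$. Batch fraction $\zeta\in(0,1]$. For $j\in[n]$: $\Omega_j=1-\gamma\zeta\sigma_j^2+\Delta$, $\lambda_{2,j}=\frac{-2\Delta+\Omega_j^2+\sqrt{\Omega_j^2(\Omega_j^2-4\Delta)}}{2}$ (complex root if the argument is negative); $\lambda_{2,\max}=\max\{|\lambda_{2,j}|:\sigma_j^2>0\}$. *)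

(* Defs.v *)
From HB Require Import structures.
From mathcomp Require Import all_boot all_order all_algebra.
From mathcomp Require Import reals.
From mathcomp Require Import complex.
Set Implicit Arguments. Unset Strict Implicit. Unset Printing Implicit Defensive.
Import Order.TTheory GRing.Theory Num.Theory.
Local Open Scope ring_scope.
Local Open Scope complex_scope.

(* The eigenvalues (with multiplicity) of the square matrix M : 'M_n are
   given by an n-tuple sig2 such that the characteristic polynomial of M
   splits as prod_j ('X - sig2_j). *)
Definition is_eigvals (R : rcfType) (n : nat) (M : 'M[R]_n) (sig2 : 'I_n -> R) :=
  char_poly M = \prod_(j < n) ('X - (sig2 j)%:P).

Section Quantities.
Variables (R : rcfType) (n : nat) (sig2 : 'I_n -> R).

Definition sig2_max : R := \big[Num.max/0]_(j < n) sig2 j.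
Definition sig2_min : R := \big[Num.min/sig2_max]_(j < n | sig2 j != 0) sig2 j.
Definition kappa_bar : R := ((n%:R)^-1 * \sum_(j < n) sig2 j) / sig2_min.
Definition kappa : R := sig2_max / sig2_min.
Definition ICR : R := kappa_bar / Num.sqrt kappa.

Variables (gamma zeta Delta : R).
Definition Omega (j : 'I_n) : R := 1 - gamma * zeta * sig2 j + Delta.
(* lambda_{2,j} = (-2 Delta + Omega_j^2 + sqrt(Omega_j^2 (Omega_j^2 - 4 Delta)))/2,
   with the principal complex square root (complex root if argument < 0). *)
Definition lambda2 (j : 'I_n) : R[i] :=
  ((- 2 * Delta + Omega j ^+ 2)%:C
   + sqrtC ((Omega j ^+ 2 * (Omega j ^+ 2 - 4 * Delta))%:C)) / 2.
Definition cmod (z : R[i]) : R := let: a +i* b := z in Num.sqrt (a ^+ 2 + b ^+ 2).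
Definition lambda2_max : R := \big[Num.max/0]_(j < n | 0 < sig2 j) cmod (lambda2 j).
End Quantities.

(* Main.v *)
Require Import Defs.
From HB Require Import structures.
From mathcomp Require Import all_boot all_order all_algebra.
From mathcomp Require Import reals.
From mathcomp Require Import complex.
From mathcomp Require Import ring lra.
Import Order.TTheory GRing.Theory Num.Theory.
Local Open Scope ring_scope.

Lemma trace_eig (R : rcfType) (n : nat) (M : 'M[R]_n) (s : 'I_n -> R) :
  (0 < n)%N -> is_eigvals M s -> \tr M = \sum_(j < n) s j.
Proof.
move=> n0 H; have := char_poly_trace M n0; rewrite H.
rewrite -(big_map s xpredT (fun p => 'X - p%:P)).
have Hs : size (map s (index_enum 'I_n)) = n.
  by rewrite size_map [index_enum _]unlock -enumT size_enum_ord.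
have := @coefPn_prod_XsubC R (map s (index_enum 'I_n)).
rewrite Hs -lt0n n0 => /(_ isT) ->; rewrite big_map => /oppr_inj <-.
by [].
Qed.

Lemma big_attain (R : realDomainType) (I : finType) (P : pred I) (F : I -> R) (op : R -> R -> R) d :
  (forall x y, op x y = x \/ op x y = y) ->
  \big[op/d]_(i | P i) F i = d \/ exists i, P i /\ \big[op/d]_(i | P i) F i = F i.
Proof.
move=> Hop; apply: (big_ind (fun x => x = d \/ exists i, P i /\ x = F i)).
- by left.
- move=> x y Hx Hy; case: (Hop x y) => ->; assumption.
- by move=> i Pi; right; exists i.
Qed.

Local Open Scope complex_scope.

Lemma half_c (R : rcfType) (x y : R) : (x +i* y) / 2 = (x / 2) +i* (y / 2).
Proof.
have h2 : (2 : R[i]) != 0 by rewrite pnatr_eq0.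
apply: (mulIf h2); rewrite mulfVK //.
have -> : (2 : R[i]) = 2 +i* 0.
  by rewrite complexr0 rmorph_nat.
rewrite [X in _ = X]/GRing.mul /=.
by congr (_ +i* _); field.
Qed.

Lemma sq_c (R : rcfType) (x y : R) : (x +i* y) ^+ 2 = (x * x - y * y) +i* (x * y + y * x).
Proof. by rewrite expr2. Qed.

Lemma key (R : rcfType) (D W e : R) :
  0 <= D -> D < 1 -> 0 < 1 + D - W -> 1 + D - W < 2*e*(1-D) -> 0 < 1 - 8*e ->
  (1 - 8*e)^+2 <= cmod (((- 2 * D + W ^+ 2)%:C + sqrtC ((W ^+ 2 * (W ^+ 2 - 4 * D))%:C)) / 2).
Proof.
move=> D0 D1 t0 te r0.
set a := - 2 * D + W ^+ 2; set b := W ^+ 2 * (W ^+ 2 - 4 * D).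
have Hsq := sqrtCK (b%:C); have Hge := sqrtC_ge0 (b%:C).
case Ez: (sqrtC b%:C) Hsq Hge => [zr zi]; rewrite sq_c => -[H1 H2].
move=> Hge; rewrite lecE ler0c /= in Hge.
have -> : a%:C + (zr +i* zi) = (a + zr) +i* (0 + zi) by [].
rewrite half_c /cmod add0r.
have e0 : 0 < e by nra.
have W0 : 0 < W by nra.
have r1 : 1 - 8 * e <= 1 by lra.
move: r0 r1; set r := 1 - 8 * e => r0 r1.
have hr : r = 1 - 8 * e by [].
have ha : a = -2 * D + W ^+ 2 by [].
have hb : b = W ^+ 2 * (W ^+ 2 - 4 * D) by [].
clearbody r a b.
suff : r ^+ 4 <= ((a + zr) / 2) ^+ 2 + (zi / 2) ^+ 2.
  move=> h; apply: (le_trans _ (ler_wsqrtr h)).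
  have -> : r ^+ 4 = (r ^+ 2) ^+ 2 by rewrite -exprM.
  by rewrite sqrtr_sqr ger0_norm // exprn_ge0 // ltW.
have r2 : 0 <= r ^+ 2 <= r by apply/andP; split; [apply: sqr_ge0 | rewrite expr2; nra].
have r4 : r ^+ 4 = (r ^+ 2) ^+ 2 by rewrite -exprM.
case: (leP r D) => [rD | Dr].
-
  case: (ltP b 0) => [bneg | bpos].
  + have zr0 : zr = 0.
      case: (eqVneq zi 0) => [zi0 | zin0].
        move: H1; rewrite zi0 mulr0 subr0 => H1; nra.
      apply/eqP; move: H2; rewrite [zi * zr]mulrC -mulr2n => /eqP.
      by rewrite mulrn_eq0 /= mulf_eq0 (negbTE zin0) orbF.
    have Hzi : zi * zi = - b by move: H1; rewrite zr0 mulr0; lra.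
    rewrite zr0 addr0.
    have : ((a / 2) ^+ 2 + (zi / 2) ^+ 2) = D ^+ 2.
      rewrite (_ : (a / 2) ^+ 2 + (zi / 2) ^+ 2 = (a * a + zi * zi) / 4); last by field.
      by rewrite Hzi ha hb; field.
    move=> ->; rewrite r4; nra.
  + move: Hge; rewrite bpos => /andP[/eqP zi0 zr0].
    rewrite zi0 mul0r expr0n /= addr0.
    have W2 : 0 < W ^+ 2 := exprn_gt0 2 W0.
    have b4 : 4 * D <= W ^+ 2.
      rewrite -subr_ge0; move: bpos; rewrite hb pmulr_rge0 //.
    have : D <= (a + zr) / 2 by rewrite ha; lra.
    rewrite r4; nra.
-
  have x0f : (1 - 4*e) ^+ 2 - W * (1 - 4*e) + D < 0 by nra.
  have sq0 : 0 <= (2 * (1 - 4*e) - W) ^+ 2 := sqr_ge0 _.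
  have d0 : 0 < W ^+ 2 - 4 * D by move: sq0 x0f; rewrite !expr2; lra.
  have bpos : 0 < b by rewrite hb mulr_gt0 // exprn_gt0.
  move: Hge; rewrite (ltW bpos) => /andP[/eqP zi0 zr0].
  rewrite zi0 mul0r expr0n /= addr0.
  have H1' : zr * zr = b by move: H1; rewrite zi0 mul0r subr0.
  have hz : W * (2 * (1 - 4 * e) - W) <= zr.
    case: (leP (2 * (1 - 4 * e) - W) 0) => h; first nra.
    set x := W * (2 * (1 - 4 * e) - W).
    have x0 : 0 < x by rewrite /x mulr_gt0.
    have hx : x * x <= zr * zr.
      rewrite H1' hb /x; move: x0f; rewrite !expr2 => x0f.
      have W2 : 0 < W * W by rewrite mulr_gt0.
      nra.
    rewrite leNgt; apply/negP => hlt.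
    have : zr * zr < x * x by nra.
    lra.
  have : (1 - 4*e) ^+ 2 <= (a + zr) / 2 by rewrite ha; nra.
  rewrite r4; nra.
Qed.

Local Close Scope complex_scope.

Lemma max_or (R : realDomainType) (x y : R) : Num.max x y = x \/ Num.max x y = y.
Proof. by rewrite /Num.max; case: (_ < _); [right | left]. Qed.

Lemma min_or (R : realDomainType) (x y : R) : Num.min x y = x \/ Num.min x y = y.
Proof. by rewrite /Num.min; case: (_ < _); [left | right]. Qed.

Theorem proposition6 (R : realType) :
  exists C : R, 0 < C /\
  forall (n d : nat) (A : 'M[R]_(n, d)) (sig2 : 'I_n -> R)
         (zeta gamma Delta : R),
    (0 < n)%N ->
    A != 0 ->
    is_eigvals (A *m A^T) sig2 ->
    0 < zeta -> zeta <= 1 ->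
    zeta <= Num.min (1 / 2) (ICR sig2) ->
    0 < gamma -> 0 <= Delta -> Delta < 1 ->
    gamma < (1 + Delta) / (zeta * sig2_max sig2) ->
    (1 - zeta) * gamma / (1 - Delta) * ((n%:R)^-1 * \tr (A *m A^T)) < 1 ->
    Num.sqrt (lambda2_max sig2 gamma zeta Delta)
      >= 1 - C * zeta / kappa_bar sig2.
Proof.
exists 8; split; first lra.
move=> n d A s z g D n0 _ Heig z0 z1 zmin g0 D0 D1 _ Htr.
rewrite (@trace_eig _ _ _ _ n0 Heig) in Htr.
move: zmin; rewrite le_min => /andP[zh zI].
have sk0 : 0 < Num.sqrt (kappa s).
  rewrite lt_neqAle sqrtr_ge0 andbT; apply/negP => /eqP h.
  by move: zI; rewrite /ICR -h invr0 mulr0 => /(lt_le_trans z0); rewrite ltxx.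
have kb0 : 0 < kappa_bar s.
  have : 0 < ICR s * Num.sqrt (kappa s) by rewrite mulr_gt0 // (lt_le_trans z0).
  by rewrite /ICR divfK // gt_eqF.
have k0 : 0 < kappa s by rewrite -sqrtr_gt0.
have mx0 : 0 <= sig2_max s by apply: bigmax_ge_id.
have mxp : 0 < sig2_max s.
  rewrite lt_neqAle mx0 andbT; apply/negP => /eqP h.
  by move: k0; rewrite /kappa -h mul0r ltxx.
have mn0 : 0 < sig2_min s.
  by move: k0; rewrite /kappa pmulr_rgt0 // invr_gt0.
have m0 : 0 < (n%:R)^-1 * \sum_(j < n) s j.
  by move: kb0; rewrite /kappa_bar pmulr_lgt0 // invr_gt0.
have [j0 [sj0 Hj0]] : exists j, 0 < s j /\ sig2_min s = s j.
  case: (@big_attain R _ (fun j => s j != 0) s _ (sig2_max s) (@min_or R)) => [h | [i [_ h]]].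
  - case: (@big_attain R _ xpredT s _ 0 (@max_or R)) => [h' | [i [_ h']]].
      by move: mxp; rewrite /sig2_max h' ltxx.
    exists i; rewrite /sig2_min h -h'; split => //.
  - by exists i; rewrite -h.
set m := (n%:R)^-1 * \sum_(j < n) s j in m0 Htr.
set mn := sig2_min s in mn0 Hj0.
have hkb : kappa_bar s = m / mn by [].
rewrite hkb.
have -> : 8 * z / (m / mn) = 8 * (z * mn / m).
  by field; apply/andP; split; rewrite gt_eqF.
set e := z * mn / m.
have e0 : 0 < e by rewrite /e divr_gt0 // mulr_gt0.
have [q0 | q0] := leP (1 - 8 * e) (0:R).
  by apply: (le_trans q0); apply: sqrtr_ge0.
have gm : g * m < 2 * (1 - D).
  have h1 : (1 - z) * g * m < 1 - D.
    by move: Htr; rewrite mulrAC ltr_pdivrMr ?subr_gt0 // mul1r.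
  have : 0 < g * m by rewrite mulr_gt0.
  nra.
have te : 1 + D - Omega s g z D j0 < 2 * e * (1 - D).
  rewrite /Omega -Hj0.
  have -> : 1 + D - (1 - g * z * mn + D) = (g * m) * e.
    by rewrite /e; field; rewrite gt_eqF.
  nra.
have t0 : 0 < 1 + D - Omega s g z D j0.
  rewrite /Omega; have : 0 < g * z * s j0 by rewrite !mulr_gt0.
  lra.
have Hk := @key _ _ _ _ D0 D1 t0 te q0.
have Hl : cmod (lambda2 s g z D j0) <= lambda2_max s g z D.
  exact: (le_bigmax_cond _ (fun j => cmod (lambda2 s g z D j)) sj0).
apply: le_trans (ler_wsqrtr (le_trans Hk Hl)).
by rewrite sqrtr_sqr ger0_norm // ltW.
Qed.
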